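(* Let $n \geq 1$ and $g \in G_n$, and for $\alpha$ coprime to $\mathrm{ord}(g)$ let $S_{g,\alpha} = \{h \in G_n : hgh^{-1} = g^{\alpha}\}$. (i) If $q_n(g) = 0$ and $g \ne \mathrm{id}$, then $\mathrm{ord}(g)=3$ and $S_{g,\alpha} = G_n$ if $\alpha \equiv 1 \bmod 3$, $S_{g,\alpha}=\varnothing$ otherwise. (ii) If $q_n(g) \neq 0$, then $S_{g,\alpha} = \varnothing$ unless $\alpha \equiv 1 \bmod \mathrm{ord}(g)$, and the centralizer $S_{g,1}$ of $g$ has size $3\cdot 9^n$ if $\pi_0(q_n(g)) \neq 0$; size $27^n$ if $\pi_0(q_n(g)) = 0$ and $\pi_i(q_n(g)) \neq 0$ for some $1\le i\le n$; and size $3 \cdot 27^n$ if $\pi_0(q_n(g)) = 0$ and $\pi_i(q_n(g)) = 0$ for all $1 \le i \le n$.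
   Context: Let $A_n = \mathbb{Z}/3\mathbb{Z} \oplus (\mathbb{Z}/9\mathbb{Z})^n$, $\pi_0: A_n \to \mathbb{Z}/3\mathbb{Z}$ the projection onto the first factor, and for $1\le i\le n$, $\pi_i: A_n \to \mathbb{Z}/3\mathbb{Z}$ the projection onto the $i$-th copy of $\mathbb{Z}/9\mathbb{Z}$ followed by reduction mod $3$. Let $\theta(a,b) = (\pi_0(a)\pi_i(b))_{1\le i\le n}$. $G_n$ is the set $(\mathbb{Z}/3\mathbb{Z})^n \times A_n$ with multiplication $(c_1,a_1)(c_2,a_2) = (c_1+c_2+\theta(a_1,a_2), a_1+a_2)$, and $q_n: G_n \to A_n$ is the projection to the second coordinate. *)

(* Defs.v *)
From HB Require Import structures.
From mathcomp Require Import all_boot all_order all_algebra all_fingroup.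
Set Implicit Arguments. Unset Strict Implicit. Unset Printing Implicit Defensive.
Import GRing.Theory.
Local Open Scope ring_scope.

Definition An (n : nat) : Type := ('Z_3 * {ffun 'I_n -> 'Z_9})%type.

Definition pi0 {n} (a : An n) : 'Z_3 := a.1.
(* pi_i : A_n -> Z/3, i-th copy of Z/9 reduced mod 3 (i : 'I_n indexes 1..n) *)
Definition pii {n} (i : 'I_n) (a : An n) : 'Z_3 := (val (a.2 i))%:R.

Definition theta {n} (a b : An n) : {ffun 'I_n -> 'Z_3} :=
  [ffun i => pi0 a * pii i b].

Definition Gn (n : nat) : Type := ({ffun 'I_n -> 'Z_3} * An n)%type.

HB.instance Definition _ n := Finite.on (Gn n).

Definition Gmul {n} (x y : Gn n) : Gn n :=
  (x.1 + y.1 + theta x.2 y.2, x.2 + y.2).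
Definition Gone {n} : Gn n := (0, 0).
Definition Ginv {n} (x : Gn n) : Gn n := (- x.1 + theta x.2 x.2, - x.2).

Lemma pii_add n (i : 'I_n) (a b : An n) : pii i (a + b) = pii i a + pii i b.
Proof.
rewrite /pii /= !ffunE /= -natrD.
apply/val_inj => /=.
rewrite !Zp_nat /=; by rewrite modn_dvdm.
Qed.

Lemma theta_addl n (a b c : An n) : theta (a + b) c = theta a c + theta b c.
Proof. by apply/ffunP => i; rewrite !ffunE /pi0 /= mulrDl. Qed.

Lemma theta_addr n (a b c : An n) : theta a (b + c) = theta a b + theta a c.
Proof. by apply/ffunP => i; rewrite !ffunE pii_add mulrDr. Qed.

Lemma theta_oppl n (a c : An n) : theta (- a) c = - theta a c.
Proof. by apply/ffunP => i; rewrite !ffunE /pi0 /= mulNr. Qed.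

Lemma acl (V : zmodType) (a b c d e f : V) :
  a + (b + c + f) + (d + e) = a + b + d + c + (e + f).
Proof.
rewrite -!addrA; congr (a + (b + _)).
by rewrite [e + f]addrC (addrCA d c) (addrCA d f).
Qed.

Lemma GmulA n : associative (@Gmul n).
Proof.
move=> x y z; rewrite /Gmul /=; congr (_, _); last by rewrite addrA.
rewrite theta_addl theta_addr.
by apply/ffunP => i; rewrite !ffunE acl.
Qed.

Lemma Gmul1 n : left_id (@Gone n) Gmul.
Proof.
move=> [c a]; rewrite /Gmul /Gone /=.
have -> : theta (0 : An n) a = 0 by apply/ffunP => i; rewrite !ffunE /pi0 /= mul0r.
by rewrite add0r addr0 add0r.
Qed.

Lemma GmulV n : left_inverse (@Gone n) Ginv Gmul.
Proof.
move=> [c a]; rewrite /Gmul /Gone /Ginv /=.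
rewrite theta_oppl; congr (_, _); last exact: addNr.
by rewrite (addrAC (- c)) addNr add0r subrr.
Qed.

HB.instance Definition _ n := Finite_isGroup.Build (Gn n) (@GmulA n) (@Gmul1 n) (@GmulV n).

Definition qn {n} (g : Gn n) : An n := g.2.

Definition Sga {n} (g : Gn n) (alpha : nat) : {set Gn n} :=
  [set h : Gn n | (h * g * h^-1 == g ^+ alpha)%g].

(* Main.v *)
Require Import Defs.
From mathcomp Require Import all_boot all_order all_algebra all_fingroup.
From mathcomp Require Import all_solvable.
From mathcomp Require Import ring zify.
Import GRing.Theory.

Lemma z9 (z : 'Z_9) : (z *+ 9 = 0)%R.
Proof. by case: z => -[|[|[|[|[|[|[|[|[|?]]]]]]]]] //= ?; apply/val_inj. Qed.
Lemma z3 (z : 'Z_3) : (z *+ 3 = 0)%R.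
Proof. by case: z => -[|[|[|?]]] //= ?; apply/val_inj. Qed.

Lemma binS2 k : 'C(k.+1, 2) = 'C(k, 2) + k.
Proof. by rewrite binS bin1. Qed.

Lemma C2 m : 3 %| 'C(m * 3, 2).
Proof.
elim: m => // m IH.
rewrite mulSn addnC !addnS addn0 !binS2 -!addnA dvdn_add //.
by apply/dvdnP; exists (m * 3 + 1); lia.
Qed.

Local Open Scope ring_scope.

Lemma c9 (k : 'Z_3) : #|[pred z : 'Z_9 | (val z)%:R == k]| = 3%N.
Proof.
rewrite -sum1_card big_mkcond /= !big_ord_recl big_ord0 /=.
by case: k => -[|[|[|m]]] Hm //=.
Qed.

Lemma z3eq (x y p q : 'Z_3) : x != 0 -> (y * p == x * q) = (q == x * y * p).
Proof.
by case: x => -[|[|[|?]]] //= ?; case: y => -[|[|[|?]]] //= ?;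
  case: p => -[|[|[|?]]] //= ?; case: q => -[|[|[|?]]] //= ?.
Qed.

Lemma z3mul (y p : 'Z_3) : p != 0 -> (y * p == 0) = (y == 0).
Proof.
by case: y => -[|[|[|?]]] //= ?; case: p => -[|[|[|?]]] //= ?.
Qed.

Lemma cardQ (T1 T2 : finType) (Q : pred (T1 * T2)) :
  #|Q| = (\sum_(y : T1) #|[pred z | Q (y, z)]|)%N.
Proof.
rewrite -sum1_card big_mkcond /=.
rewrite (eq_bigr (fun y => \sum_(z : T2) (if Q (y, z) then 1 else 0))%N); last first.
  by move=> y _; rewrite -sum1_card big_mkcond.
by rewrite pair_big /=; apply: eq_bigr => -[y z] _.
Qed.

Lemma foldr_const (T : Type) (s : seq T) k : foldr muln 1%N [seq k | _ <- s] = (k ^ size s)%N.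
Proof. by elim: s => //= x s ->; rewrite expnS. Qed.

Lemma foldr_img (T : finType) (F : T -> nat) k : (forall x, F x = k) ->
  foldr muln 1%N [seq F x | x : T] = (k ^ #|T|)%N.
Proof. move=> H; rewrite /image_mem (eq_map H) foldr_const cardE //. Qed.

Section S.
Variable n : nat.

Lemma pii0 (i : 'I_n) : pii i (0 : An n) = 0.
Proof. by rewrite /pii ffunE. Qed.

Lemma piiN (i : 'I_n) (b : An n) : pii i (- b) = - pii i b.
Proof. by apply/eqP; rewrite -subr_eq0 opprK -pii_add addNr pii0. Qed.

Lemma theta0l (b : An n) : theta 0 b = 0.
Proof. by apply/ffunP => i; rewrite !ffunE /pi0 /= mul0r. Qed.

Lemma theta0r (b : An n) : theta b 0 = 0.
Proof. by apply/ffunP => i; rewrite !ffunE pii0 mulr0. Qed.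

Lemma theta_oppr (a b : An n) : theta a (- b) = - theta a b.
Proof. by apply/ffunP => i; rewrite !ffunE piiN mulrN. Qed.

Lemma theta_mulrnl (a b : An n) k : theta (a *+ k) b = theta a b *+ k.
Proof. elim: k => [|k IH]; first by rewrite !mulr0n theta0l.
by rewrite !mulrS theta_addl IH. Qed.

Lemma mulE (x y : Gn n) : (x * y)%g = Gmul x y. Proof. by []. Qed.
Lemma invE (x : Gn n) : (x^-1)%g = Ginv x. Proof. by []. Qed.

Lemma conjE (h g : Gn n) : (h * g * h^-1)%g = (g.1 + theta h.2 g.2 - theta g.2 h.2, g.2).
Proof.
rewrite !mulE invE /Gmul /Ginv /= theta_addl !theta_oppr; congr pair.
  by apply/ffunP=> i; rewrite !ffunE; ring.
by rewrite addrAC subrr add0r.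
Qed.

Lemma powE (g : Gn n) k : (g ^+ k)%g = (g.1 *+ k + theta g.2 g.2 *+ 'C(k,2), g.2 *+ k).
Proof.
elim: k => [|k IH]; first by rewrite expg0 !mulr0n addr0.
rewrite expgSr mulE IH /= /Gmul /= theta_mulrnl binS bin1 !mulrSr mulrnDr.
congr pair; rewrite -!addrA; congr (_ + _); exact: addrCA.
Qed.

Lemma F3 (x : {ffun 'I_n -> 'Z_3}) : x *+ 3 = 0.
Proof. by apply/ffunP=> i; rewrite ffunMnE !ffunE z3. Qed.

Lemma A9 (a : An n) : a *+ 9 = 0.
Proof.
rewrite pairMnE; case: a => x f /=.
have -> : x *+ 9 = 0 by rewrite (mulrnA x 3 3) z3.
by congr pair; apply/ffunP=> i; rewrite ffunMnE !ffunE z9.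
Qed.

Lemma mod9 (a : An n) m : a *+ m = a *+ (m %% 9).
Proof.
by rewrite {1}(divn_eq m 9) mulrnDr mulrnA A9 add0r.
Qed.

Lemma inv9 (a : An n) r s : ((r * s) %% 9 = 1)%N -> a *+ r = 0 -> a = 0.
Proof.
move=> rs ar; have -> : a = a *+ ((r * s) %% 9) by rewrite rs.
by rewrite -mod9 mulrnA ar mul0rn.
Qed.

Lemma div3 (a : An n) b : a != 0 -> a *+ b = 0 -> (3 %| b)%N.
Proof.
move=> a0 ab; have e : (b %% 9 %% 3 = b %% 3)%N by rewrite modn_dvdm.
rewrite /dvdn -e.
have ar : a *+ (b %% 9) = 0 by rewrite -mod9.
have : (b %% 9 < 9)%N by rewrite ltn_mod.
move: (b %% 9)%N ar => r ar.
case: r ar => [|[|[|[|[|[|[|[|[|r]]]]]]]]] ar // _.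
- by rewrite (@inv9 a 1 1 erefl ar) ?eqxx in a0.
- by rewrite (@inv9 a 2 5 erefl ar) ?eqxx in a0.
- by rewrite (@inv9 a 4 7 erefl ar) ?eqxx in a0.
- by rewrite (@inv9 a 5 2 erefl ar) ?eqxx in a0.
- by rewrite (@inv9 a 7 4 erefl ar) ?eqxx in a0.
- by rewrite (@inv9 a 8 8 erefl ar) ?eqxx in a0.
Qed.

Lemma key (g : Gn n) al : g.2 != 0 -> g.2 *+ al = g.2 -> (g ^+ al)%g = g.
Proof.
case: al => [|b] g0; first by rewrite mulr0n => e; rewrite -e eqxx in g0.
rewrite mulrSr -[X in _ = X]add0r => /addIr gb.
have /dvdnP [m bm] := div3 _ _ g0 gb.
have /dvdnP [m' cm] := C2 m.
rewrite expgSr powE gb bm mulrnA F3 cm mulrnA F3 mulE /Gmul /=.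
by rewrite !add0r theta0l addr0; case: g {g0 gb}.
Qed.

Definition Pc (a : An n) := [pred b : An n | theta b a == theta a b].

Lemma thetaeq (a b : An n) :
  (theta b a == theta a b) = [forall i, pi0 b * pii i a == pi0 a * pii i b].
Proof.
apply/eqP/forallP => [H i | H].
  by move/ffunP: H => /(_ i); rewrite !ffunE => ->.
by apply/ffunP => i; rewrite !ffunE; apply/eqP.
Qed.

Lemma card_centr (g : Gn n) : #|Sga g 1| = (3 ^ n * #|Pc g.2|)%N.
Proof.
have e : Sga g 1 =i [predX predT & Pc g.2].
  move=> h; rewrite !inE expg1 conjE /=.
  case: g => c a /=; rewrite xpair_eqE eqxx andbT.
  by rewrite -addrA -{2}[c]addr0 (inj_eq (addrI c)) subr_eq0.
by rewrite (eq_card e) cardX card_ffun !card_ord.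
Qed.

Lemma cardL3 (a : An n) : pi0 a = 0 -> (forall i, pii i a = 0) -> #|Pc a| = (3 * 9 ^ n)%N.
Proof.
move=> h0 hi.
have e : Pc a =i predT.
  by move=> b; rewrite !inE thetaeq; apply/forallP => i; rewrite hi h0 !mulr0 mul0r.
by rewrite (eq_card e) card_prod card_ffun !card_ord.
Qed.

Lemma cardL2 (a : An n) : pi0 a = 0 -> (exists i, pii i a != 0) -> #|Pc a| = (9 ^ n)%N.
Proof.
move=> h0 [j hj].
have e : Pc a =i [predX pred1 0 & predT].
  move=> b; rewrite !inE thetaeq h0 andbT; apply/forallP/idP => [H | /eqP hb i].
    by have := H j; rewrite mul0r z3mul.
  by rewrite /pi0 hb !mul0r.
by rewrite (eq_card e) cardX card1 card_ffun !card_ord mul1n.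
Qed.

Lemma cardL1 (a : An n) : pi0 a != 0 -> #|Pc a| = (3 * 3 ^ n)%N.
Proof.
move=> h0.
rewrite cardQ (eq_bigr (fun _ => 3 ^ n)%N) ?sum_nat_const ?card_ord //.
move=> y _.
have e : [pred z | Pc a (y, z)] =i family (fun i => [pred z : 'Z_9 | (val z)%:R == pi0 a * y * pii i a]).
  move=> f; rewrite !inE thetaeq; apply/forallP/familyP => H i; have := H i;
  by rewrite /= z3eq.
by rewrite (eq_card e) card_family (@foldr_img _ _ 3) ?card_ord // => i; exact: c9.
Qed.
Lemma conj_triv (g h : Gn n) : g.2 = 0 -> (h * g * h^-1)%g = g.
Proof.
move=> H; rewrite conjE H theta0r theta0l subr0 addr0.
by case: g H => ? ? /= ->.
Qed.
End S.

Local Open Scope group_scope.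

Theorem mainTheorem7 (n : nat) (g : Gn n) : (1 <= n)%N ->
  (* (i) *)
  ((qn g = 0%R) -> g != 1 ->
     #[g] = 3%N /\
     (forall alpha : nat, coprime alpha #[g] ->
        (alpha = 1 %[mod 3] -> Sga g alpha = [set: Gn n]) /\
        (alpha <> 1 %[mod 3] -> Sga g alpha = set0)))
  /\
  (* (ii) *)
  ((qn g != 0%R) ->
     (forall alpha : nat, coprime alpha #[g] ->
        alpha <> 1 %[mod #[g]] -> Sga g alpha = set0) /\
     (pi0 (qn g) != 0%R -> #|Sga g 1| = (3 * 9 ^ n)%N) /\
     (pi0 (qn g) = 0%R -> (exists i : 'I_n, pii i (qn g) != 0%R) ->
        #|Sga g 1| = (27 ^ n)%N) /\
     (pi0 (qn g) = 0%R -> (forall i : 'I_n, pii i (qn g) = 0%R) ->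
        #|Sga g 1| = (3 * 27 ^ n)%N)).
Proof.
move=> _; rewrite /qn; split.
- move=> a0 g1.
  have o3 : #[g] = 3%N.
    have d : (#[g] %| 3)%N.
      rewrite order_dvdn powE a0 theta0l mul0rn F3 add0r mul0rn; exact/eqP.
    have n1 : #[g] != 1%N by rewrite order_eq1.
    move: #[g] d n1 => k; case: k => [|[|[|[|k]]]] //.
  split; first exact: o3.
  move=> al _; split.
  + move=> al1; apply/setP=> h; rewrite !inE conj_triv // -expg_mod_order o3 al1.
    by rewrite expg1 eqxx.
  + move=> al1; apply/setP=> h; rewrite !inE conj_triv //; apply/negbTE.
    rewrite -{1}(expg1 g) eq_expg_mod_order o3; apply/eqP => e.
    exact: al1 (esym e).
- move=> a0; split.
    move=> al _ al1; apply/setP=> h; rewrite !inE conjE; apply/negbTE/eqP => e.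
    apply: al1; apply/eqP; rewrite -eq_expg_mod_order expg1 key //.
    by have := congr1 snd e; rewrite powE /= => <-.
  split; [move=> h0|split; [move=> h0 hi|move=> h0 hi]].
  + by rewrite card_centr cardL1 // mulnCA -expnMn.
  + by rewrite card_centr cardL2 // -expnMn.
  + by rewrite card_centr cardL3 // mulnCA -expnMn.
Qed.
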